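(* There exists a constant $h>0$ (depending only on $x$ and $d_{\max}$) such that for every $k\ge t$ with $d_{\min}+1\le n-k\le d_{\max}+1$, writing $\ell=n-k$, we have $a_{k_1,\dots,k_x}<h\cdot n^{-\ell}$ for every tuple $(k_1,\dots,k_x)$ of integers with $t_i\le k_i\le a_i$ and $\sum_i k_i=k$, and $\alpha_k\le\frac{h}{n^2}$.
   Context: Random graph model: $V$ is a set of $n$ vertices, $B\subseteq V$ a target set with $|B|=t$, each $v\in V$ has a prescribed out-degree $d_v$ with $2\le d_{\min}\le d_v\le d_{\max}$ (constants independent of $n$), and for each $v$ independently its out-neighbour set is chosen uniformly among all $d_v$-element subsets of $V$. Let $d_1,\dots,d_x$ be the distinct out-degrees, $a_i$ the number of vertices of out-degree $d_i$, $t_i$ the number of vertices of $B$ of out-degree $d_i$. For $S\supseteq B$ containing $k_i$ vertices of out-degree $d_i$, $R(k_1,\dots,k_x)$ is the probability that every vertex of $S$ has a directed path to $B$ lying inside $S$. For $k=\sum_i k_i$ with $t_i\le k_i\le a_i$, $a_{k_1,\dots,k_x}=\left(\prod_{i=1}^x\binom{a_i-t_i}{k_i-t_i}\left(\binom{n-k}{d_i}/\binom{n}{d_i}\right)^{a_i-k_i}\right)R(k_1,\dots,k_x)$, with the factor $(\binom{n-k}{d_i}/\binom{n}{d_i})^{a_i-k_i}$ equal to $1$ when $a_i=k_i$ and $\binom{m}{d}=0$ for $d>m$, and $\alpha_k=\sum_{\sum_i k_i=k,\ t_i\le k_i\le a_i}a_{k_1,\dots,k_x}$. *)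

(* Defs.v *)
From mathcomp Require Import all_boot all_order all_algebra.
Set Implicit Arguments. Unset Strict Implicit. Unset Printing Implicit Defensive.
Import Order.TTheory GRing.Theory Num.Theory.
Local Open Scope ring_scope.

(* Vertex set V = 'I_n; d : 'I_n -> nat are the prescribed out-degrees. *)

Definition degs (n : nat) (d : 'I_n -> nat) : seq nat :=
  undup [seq d v | v <- enum 'I_n].

(* d_i  (0-based index i) *)
Definition deg_i (n : nat) (d : 'I_n -> nat) (i : nat) : nat := nth 0%N (degs d) i.

Definition acount (n : nat) (d : 'I_n -> nat) (i : nat) : nat :=
  #|[set v : 'I_n | d v == deg_i d i]|.

Definition tcount (n : nat) (d : 'I_n -> nat) (B : {set 'I_n}) (i : nat) : nat :=
  #|[set v in B | d v == deg_i d i]|.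

(* Sample space: out-neighbour sets, N(v) a d_v-subset of V for every v.
   The product of independent uniform choices is the uniform measure on it. *)
Definition config (n : nat) (d : 'I_n -> nat) : {set {ffun 'I_n -> {set 'I_n}}} :=
  [set f : {ffun 'I_n -> {set 'I_n}} | [forall v, #|f v| == d v]].

Definition reaches_in (n : nat) (f : {ffun 'I_n -> {set 'I_n}}) (S B : {set 'I_n}) : bool :=
  [forall u in S, [exists b in B,
     connect [rel a c | [&& a \in S, c \in S & c \in f a]] u b]].

Definition prob_reach (R : realFieldType) (n : nat) (d : 'I_n -> nat) (S B : {set 'I_n}) : R :=
  #|[set f in config d | reaches_in f S B]|%:R / #|config d|%:R.

(* R(k_1,...,k_x): the probability above for a set S ⊇ B containing k_i
   vertices of out-degree d_i (independent of the choice of S by symmetry). *)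
Definition Rtuple (R : realFieldType) (n : nat) (d : 'I_n -> nat) (B : {set 'I_n})
    (x : nat) (kk : 'I_x -> nat) : R :=
  match [pick S : {set 'I_n} | (B \subset S) &&
           [forall i : 'I_x, #|[set v in S | d v == deg_i d i]| == kk i]] with
  | Some S0 => prob_reach R d S0 B
  | None => 0
  end.

Definition acoef (R : realFieldType) (n : nat) (d : 'I_n -> nat) (B : {set 'I_n})
    (x : nat) (kk : 'I_x -> nat) : R :=
  let k := (\sum_(i < x) kk i)%N in
  (\prod_(i < x)
      ('C(acount d i - tcount d B i, kk i - tcount d B i)%:R
       * ('C(n - k, deg_i d i)%:R / 'C(n, deg_i d i)%:R) ^+ (acount d i - kk i)))
  * Rtuple R d B kk.

(* alpha_k : sum of a_{k_1..k_x} over t_i <= k_i <= a_i with sum k_i = k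
   (each k_i <= a_i <= n, so k_i ranges in 'I_n.+1 without loss). *)
Definition alpha (R : realFieldType) (n : nat) (d : 'I_n -> nat) (B : {set 'I_n})
    (x k : nat) : R :=
  \sum_(kk : {ffun 'I_x -> 'I_n.+1} |
          [forall i : 'I_x, (tcount d B i <= kk i <= acount d i)%N]
          && ((\sum_(i < x) kk i)%N == k))
     acoef R d B (fun i => nat_of_ord (kk i)).

(* Main.v *)
Require Import Defs.
From mathcomp Require Import all_boot all_order all_algebra.
From mathcomp Require Import zify ring lra.
Import Order.TTheory GRing.Theory Num.Theory.



Lemma ffact_le_exp (m N : nat) : (N ^_ m <= N ^ m)%N.
Proof.
elim: m N => [|m IH] N; first by rewrite ffactn0 expn0.
rewrite ffactnS expnS leq_mul2l; apply/orP; right.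
apply: leq_trans (IH _) _.
case: m {IH} => [|m]; first by rewrite !expn0.
by rewrite leq_exp2r // leq_pred.
Qed.

Lemma bin_le_exp (N m : nat) : ('C(N, m) <= N ^ m)%N.
Proof.
apply: leq_trans (ffact_le_exp m N); rewrite -bin_ffact.
by apply: leq_pmulr; apply: fact_gt0.
Qed.

Lemma bin_lb (n d : nat) : (2 <= d <= n)%N -> (n ^ 2 <= 2 * d`! * 'C(n, d))%N.
Proof.
case/andP=> d2 dn.
rewrite mulnAC -mulnA bin_ffact.
case: d d2 dn => [|[|m]] // _ dn.
rewrite !ffactnS /=.
have : (0 < n.-1.-1 ^_ m)%N by rewrite ffact_gt0; lia.
move: (n.-1.-1 ^_ m) => q q0.
have : (n ^ 2 <= 2 * (n * n.-1))%N by rewrite expnS expn1; nia.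
move=> h; apply: leq_trans h _; rewrite leq_mul2l; apply/orP; right.
by rewrite leq_mul2l leq_pmulr ?orbT.
Qed.
Local Open Scope ring_scope.

Definition cst (dmax : nat) : nat := (dmax.+1 ^ dmax * (2 * dmax`!))%N.

Lemma ratio_bound (R : realFieldType) (n l d dmax : nat) :
  (2 <= d <= dmax)%N -> (l <= dmax.+1)%N -> (0 < n)%N ->
  'C(l, d)%:R / 'C(n, d)%:R <= (cst dmax)%:R / n%:R ^+ 2 :> R.
Proof.
move=> /andP[d2 ddm] ldm n0.
case: (leqP d n) => dn.
  have C0 : 0 < 'C(n, d)%:R :> R by rewrite ltr0n bin_gt0.
  rewrite ler_pdivrMr // mulrAC ler_pdivlMr ?exprn_gt0 ?ltr0n //.
  rewrite -natrX -!natrM ler_nat /cst.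
  have h1 : ('C(l, d) <= dmax.+1 ^ dmax)%N.
    have e1 := bin_le_exp l d.
    have e2 : (l ^ d <= dmax.+1 ^ d)%N by rewrite leq_exp2r //; lia.
    have e3 : (dmax.+1 ^ d <= dmax.+1 ^ dmax)%N by apply: leq_pexp2l.
    lia.
  have h2 : (n ^ 2 <= 2 * dmax`! * 'C(n, d))%N.
    have e1 := @bin_lb n d; rewrite d2 dn in e1.
    have e2 : (2 * d`! * 'C(n, d) <= 2 * dmax`! * 'C(n, d))%N.
      by rewrite leq_mul2r leq_mul2l leq_fact ?orbT.
    by apply: leq_trans (e1 isT) e2.
  have e3 := leq_mul h1 h2. by rewrite !mulnA in e3 *.
rewrite (bin_small dn) mulr0n invr0 mulr0 divr_ge0 // exprn_ge0 //.
Qed.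

Lemma Rtuple_range (R : realFieldType) (n : nat) (d : 'I_n -> nat) (B : {set 'I_n})
   (x : nat) (kk : 'I_x -> nat) : 0 <= Rtuple R d B kk <= 1.
Proof.
rewrite /Rtuple; case: pickP => [S _|_]; last by rewrite lexx ler01.
rewrite /prob_reach.
have hs : (#|[set f in config d | reaches_in f S B]| <= #|config d|)%N.
  by apply: subset_leq_card; apply/subsetP => f; rewrite inE => /andP[].
apply/andP; split; first by rewrite divr_ge0.
have [->|c0] := eqVneq #|config d| 0%N; first by rewrite invr0 mulr0 ler01.
by rewrite ler_pdivrMr ?ltr0n ?lt0n // mul1r ler_nat.
Qed.

Lemma sum_acount (n : nat) (d : 'I_n -> nat) (x : nat) :
  size (degs d) = x -> (\sum_(i < x) acount d i)%N = n.
Proof.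
move=> <-.
rewrite /acount.
have H : forall i, #|[set v : 'I_n | d v == deg_i d i]| =
   (\sum_(v < n) (d v == deg_i d i))%N.
  move=> i; rewrite -sum1_card big_mkcond /=; apply: eq_bigr => v _; rewrite inE; by case: eqP.
under eq_bigr => i _ do rewrite H.
rewrite exchange_big /= -[n in RHS]card_ord -sum1_card.
apply: eq_bigr => v _.
rewrite -(big_mkord xpredT (fun i => (d v == deg_i d i) : nat)).
rewrite /deg_i -(big_nth 0%N xpredT (fun a => (d v == a) : nat)).
rewrite (eq_bigr (fun a => if d v == a then 1 else 0)%N); last by move=> a _; case: eqP.
rewrite -big_mkcond sum1_count (@eq_count _ _ (pred1 (d v))); last by move=> a; rewrite /= eq_sym.
rewrite count_uniq_mem ?undup_uniq //.
by rewrite mem_undup map_f // mem_enum.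
Qed.

Lemma deg_range (n dmin dmax : nat) (d : 'I_n -> nat) (i : nat) :
  (forall v, dmin <= d v <= dmax)%N -> (i < size (degs d))%N ->
  (dmin <= deg_i d i <= dmax)%N.
Proof.
move=> hd hi; have : deg_i d i \in degs d by apply: mem_nth.
by rewrite mem_undup => /mapP [v _ ->].
Qed.

Lemma acount_le (n : nat) (d : 'I_n -> nat) i : (acount d i <= n)%N.
Proof. by rewrite /acount; apply: leq_trans (max_card _) _; rewrite card_ord. Qed.

Lemma factor_bound (R : realFieldType) (n l dd dmax a t k : nat) :
  (2 <= dd <= dmax)%N -> (l <= dmax.+1)%N -> (0 < n)%N ->
  (t <= k <= a)%N -> (a <= n)%N ->
  0 <= ('C(a - t, k - t)%:R : R) * ('C(l, dd)%:R / 'C(n, dd)%:R) ^+ (a - k)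
    <= ((cst dmax)%:R / n%:R) ^+ (a - k).
Proof.
move=> hd hl n0 /andP[tk ka] an.
set r : R := _ / _.
have r0 : 0 <= r by rewrite divr_ge0.
have rb : r <= (cst dmax)%:R / n%:R ^+ 2 by apply: ratio_bound.
have Cb : ('C(a - t, k - t) <= n ^ (a - k))%N.
  have -> : (k - t = (a - t) - (a - k))%N by lia.
  rewrite bin_sub; last by lia.
  apply: leq_trans (bin_le_exp _ _) _.
  case: (a - k)%N => [|m]; first by rewrite !expn0.
  by rewrite leq_exp2r //; lia.
have rm0 : 0 <= r ^+ (a - k) by rewrite exprn_ge0.
apply/andP; split; first by rewrite mulr_ge0.
have -> : ((cst dmax)%:R / n%:R) ^+ (a - k) = n%:R ^+ (a - k) * ((cst dmax)%:R / n%:R ^+ 2) ^+ (a - k) :> R.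
  rewrite -exprMn; congr (_ ^+ _).
  have nz : n%:R != 0 :> R by rewrite pnatr_eq0 -lt0n.
  by field.
apply: ler_pM => //.
  by rewrite -natrX ler_nat.
by apply: lerXn2r; rewrite // nnegrE (le_trans r0 rb).
Qed.

Lemma acoef_bound (R : realFieldType) (n dmin dmax : nat) (d : 'I_n -> nat)
  (B : {set 'I_n}) (x k : nat) (kk : 'I_x -> nat) :
  (2 <= dmin)%N -> (forall v, dmin <= d v <= dmax)%N -> size (degs d) = x ->
  (dmin + 1 <= n - k <= dmax + 1)%N ->
  (forall i : 'I_x, tcount d B i <= kk i <= acount d i)%N ->
  (\sum_(i < x) kk i)%N = k ->
  0 <= acoef R d B kk <= (cst dmax)%:R ^+ (n - k) / n%:R ^+ (n - k).
Proof.
move=> d2 hd sz hl hkk hs.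
have n0 : (0 < n)%N by lia.
rewrite /acoef /= hs.
have /andP[Rt0 Rt1] := @Rtuple_range R n d B x kk.
pose F := fun i : 'I_x => ('C(acount d i - tcount d B i, kk i - tcount d B i)%:R *
     ('C(n - k, deg_i d i)%:R / 'C(n, deg_i d i)%:R) ^+ (acount d i - kk i) : R).
rewrite (_ : \prod_(i < x) _ = \prod_(i < x) F i) //.
have hF : forall i : 'I_x, 0 <= F i <= ((cst dmax)%:R / n%:R) ^+ (acount d i - kk i).
  move=> i; rewrite /F.
  have /andP[t1 t2] := hkk i.
  apply: factor_bound => //.
  - have := @deg_range n dmin dmax d i hd; rewrite sz ltn_ord => /(_ isT) /andP[h1 h2].
    by rewrite h2 (leq_trans d2 h1).
  - lia.
  - exact: acount_le.
have P0 : 0 <= \prod_(i < x) F i by apply: prodr_ge0 => i _; case/andP: (hF i).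
have P1 : \prod_(i < x) F i <= ((cst dmax)%:R / n%:R) ^+ (n - k).
  apply: le_trans; first by apply: ler_prod => i _; exact: hF i.
  rewrite prodrXr sumnB; last by move=> i _; case/andP: (hkk i).
  by rewrite sum_acount // hs.
apply/andP; split; first by rewrite mulr_ge0.
rewrite -expr_div_n -[X in _ <= X]mulr1.
by apply: ler_pM.
Qed.

Theorem lemma17 (R : realFieldType) (x dmax : nat) :
  exists2 h : R, 0 < h &
  forall (n dmin : nat) (d : 'I_n -> nat) (B : {set 'I_n}),
    (2 <= dmin)%N ->
    (forall v, dmin <= d v <= dmax)%N ->
    size (degs d) = x ->
    forall k : nat, (#|B| <= k)%N -> (dmin + 1 <= n - k <= dmax + 1)%N ->
      (forall kk : 'I_x -> nat,
          (forall i : 'I_x, tcount d B i <= kk i <= acount d i)%N ->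
          (\sum_(i < x) kk i)%N = k ->
          acoef R d B kk < h * n%:R ^- (n - k))
      /\ alpha R d B x k <= h / n%:R ^+ 2.
Proof.
pose c := cst dmax.
have c1 : (0 < c)%N by rewrite /c /cst !muln_gt0 expn_gt0 fact_gt0.
pose h0 := (c ^ dmax.+1)%N.
pose N := (dmax.+2 ^ x)%N.
have N1 : (0 < N)%N by rewrite expn_gt0.
exists (N * (h0 + 1))%:R; first by rewrite ltr0n muln_gt0 N1 addn1.
move=> n dmin d B d2 hd sz k kB hl.
have n0 : (0 < n)%N by lia.
have npos : 0 < n%:R ^+ (n - k) :> R by rewrite exprn_gt0 // ltr0n.
have hb : forall kk : 'I_x -> nat,
    (forall i : 'I_x, tcount d B i <= kk i <= acount d i)%N ->
    (\sum_(i < x) kk i)%N = k ->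
    acoef R d B kk <= h0%:R / n%:R ^+ (n - k).
  move=> kk hkk hs.
  have /andP[_ hle] := @acoef_bound R n dmin dmax d B x k kk d2 hd sz hl hkk hs.
  apply: le_trans hle _.
  rewrite ler_pdivrMr // divfK ?gt_eqF // -natrX ler_nat.
  apply: leq_pexp2l => //; lia.
split.
  move=> kk hkk hs; apply: le_lt_trans (hb kk hkk hs) _.
  rewrite ltr_pdivrMr // -mulrA mulVf ?gt_eqF // mulr1.
  rewrite ltr_nat; nia.
rewrite /alpha.
apply: (@le_trans _ _ (\sum_(kk : {ffun 'I_x -> 'I_n.+1} |
          [forall i : 'I_x, (tcount d B i <= kk i <= acount d i)%N]
          && ((\sum_(i < x) kk i)%N == k)) (h0%:R / n%:R ^+ (n - k)))).
  apply: ler_sum => kk /andP[/forallP hf /eqP hs]; apply: hb => // i; exact: hf i.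
rewrite sumr_const -(mulr_natr (h0%:R / _)).
apply: (@le_trans _ _ (h0%:R / n%:R ^+ (n - k) * N%:R)).
  apply: ler_pM => //; first by rewrite divr_ge0 // exprn_ge0.
  rewrite ler_nat.
  pose f := fun kk : {ffun 'I_x -> 'I_n.+1} =>
    [ffun i : 'I_x => (inord (acount d i - kk i) : 'I_dmax.+2)].
  have -> : N = #|{ffun 'I_x -> 'I_dmax.+2}| by rewrite card_ffun !card_ord.
  apply: (leq_card_in f) => k1 k2.
  rewrite !unfold_in => /andP[/forallP h1 /eqP s1] /andP[/forallP h2 /eqP s2] /ffunP e.
  have bnd : forall kk : {ffun 'I_x -> 'I_n.+1},
      (forall i : 'I_x, (tcount d B i <= kk i <= acount d i)%N) ->
      (\sum_(i < x) kk i)%N = k ->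
      forall i : 'I_x, (acount d i - kk i <= dmax.+1)%N.
    move=> kk hk sk i.
    have hsum : (\sum_(j < x) (acount d j - kk j) = n - k)%N.
      rewrite sumnB; last by move=> j _; case/andP: (hk j).
      by rewrite (@sum_acount n d x sz) sk.
    have : (acount d i - kk i <= \sum_(j < x) (acount d j - kk j))%N.
      by rewrite (bigD1 i) //= leq_addr.
    lia.
  apply/ffunP => i; apply: val_inj.
  have := e i; rewrite !ffunE => /(congr1 val).
  rewrite /= !inordK; last first.
    - by rewrite ltnS; apply: bnd.
    - by rewrite ltnS; apply: bnd.
  have := h1 i; have := h2 i; lia.
rewrite mulrAC ler_pdivrMr ?exprn_gt0 ?ltr0n // mulrAC ler_pdivlMr ?exprn_gt0 ?ltr0n // -!natrX -!natrM ler_nat.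
have : (n ^ 2 <= n ^ (n - k))%N by apply: leq_pexp2l => //; lia.
nia.
Qed.
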